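(* Let $\{|a_i\rangle\}$, $\{|b_j\rangle\}$ be orthonormal bases of finite-dimensional systems $A$, $B$, $n=\min\{\dim A,\dim B\}$, and let $\rho_{AB}=\sum_{i,j=1}^n\rho_{ij}|a_i\rangle\langle a_j|\otimes|b_i\rangle\langle b_j|$ be a state (a maximally correlated state). Let $E$ be an entanglement measure. Then $$Q^{AB}_E(\rho_{AB})=Q^A_E(\rho_{AB})=E_{A:B}(\rho_{AB}).$$
   Context: An entanglement measure $E$ assigns to each bipartite state $\tau_{X:Y}$ (of finite-dimensional systems, for any bipartition) a value $E_{X:Y}(\tau)$ that is nonnegative, zero on separable states, and does not increase under local operations and classical communication (in particular it is invariant under local unitaries/isometries). For a system $S$ of dimension $m$ with orthonormal basis $\{|s_k\rangle\}$, the measurement interaction is the isometry $V_S:S\to S\otimes S'$ ($S'$ $m$-dimensional with computational basis $\{|k\rangle\}$), $V_S|s_k\rangle=|s_k\rangle|k\rangle$. Define $Q^A_E(\rho_{AB})=\min E_{AB:A'}\big((V_A\otimes\mathbb I_B)\rho_{AB}(V_A\otimes\mathbb I_B)^\dagger\big)$ over orthonormal bases of $A$, and $Q^{AB}_E(\rho_{AB})=\min E_{AB:A'B'}\big((V_A\otimes V_B)\rho_{AB}(V_A\otimes V_B)^\dagger\big)$ over orthonormal bases of $A$ and $B$. *)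

(* Defs.v *)
From mathcomp Require Import all_boot all_algebra.
From mathcomp Require Import classical_sets reals.
From mathcomp.real_closed Require Import complex mxtens.

Set Implicit Arguments.
Unset Strict Implicit.
Unset Printing Implicit Defensive.

Import GRing.Theory Num.Theory.
Local Open Scope ring_scope.

Section Quantum.

Variable R : realType.
Local Notation C := (R[i]).

Definition adjmx m n (A : 'M[C]_(m, n)) : 'M[C]_(n, m) :=
  \matrix_(i, j) (A j i)^*.

(* Positive semidefinite: <x|A|x> >= 0 for every vector x (written here with
   the row vector v = <x|, so <x|A|x> = v A v^dagger). *)
Definition psdmx n (A : 'M[C]_n) : Prop :=
  forall v : 'rV[C]_n, 0 <= (v *m A *m adjmx v) 0 0.

Definition is_state n (rho : 'M[C]_n) : Prop := psdmx rho /\ \tr rho = 1.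

(* Unitary matrix; its columns form an orthonormal basis. *)
Definition unitary_mx n (U : 'M[C]_n) : Prop := adjmx U *m U = 1%:M.

(* A bipartite system X:Y with dim X = dX, dim Y = dY has Hilbert space
   X (x) Y of dimension dX*dY, with the Kronecker ordering of [tensmx]. *)

Definition separable_state (dX dY : nat) (rho : 'M[C]_(dX * dY)) : Prop :=
  exists (K : nat) (p : 'I_K -> R) (sig : 'I_K -> 'M[C]_dX)
         (tau : 'I_K -> 'M[C]_dY),
    [/\ forall k, 0 <= p k,
        \sum_(k < K) p k = 1,
        forall k, is_state (sig k) /\ is_state (tau k) &
        rho = \sum_(k < K) ((p k)%:C)%C *: tensmx (sig k) (tau k)].

(* LOCC instruments (finite-round LOCC, standard inductive definition):
   [LOCC_instr a b a' b' K Lam] : the family Lam of K CP maps (indexed by the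
   classical outcome) from states of A:B (dims a,b) to states of A':B'
   (dims a',b') is implementable by LOCC. *)
Inductive LOCC_instr : forall (a b a' b' K : nat),
    ('I_K -> 'M[C]_(a * b) -> 'M[C]_(a' * b')) -> Prop :=
  | LOCC_localA (a b a' K J : nat) (Kr : 'I_K -> 'I_J -> 'M[C]_(a', a)) :
      \sum_(k < K) \sum_(j < J) adjmx (Kr k j) *m Kr k j = 1%:M ->
      @LOCC_instr a b a' b K
        (fun k X => \sum_(j < J)
            tensmx (Kr k j) (1%:M : 'M[C]_b) *m X
              *m adjmx (tensmx (Kr k j) (1%:M : 'M[C]_b)))
  | LOCC_localB (a b b' K J : nat) (Kr : 'I_K -> 'I_J -> 'M[C]_(b', b)) :
      \sum_(k < K) \sum_(j < J) adjmx (Kr k j) *m Kr k j = 1%:M ->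
      @LOCC_instr a b a b' K
        (fun k X => \sum_(j < J)
            tensmx (1%:M : 'M[C]_a) (Kr k j) *m X
              *m adjmx (tensmx (1%:M : 'M[C]_a) (Kr k j)))
  | LOCC_coarse (a b a' b' K L : nat)
      (Lam : 'I_K -> 'M[C]_(a * b) -> 'M[C]_(a' * b')) (f : 'I_K -> 'I_L) :
      @LOCC_instr a b a' b' K Lam ->
      @LOCC_instr a b a' b' L (fun l X => \sum_(k < K | f k == l) Lam k X)
  (* classical communication: conditioned on the outcome k of a first LOCC
     instrument, an LOCC instrument Gam k is applied *)
  | LOCC_cond (a b a1 b1 a2 b2 K L : nat)
      (Lam : 'I_K -> 'M[C]_(a * b) -> 'M[C]_(a1 * b1))
      (Gam : 'I_K -> 'I_L -> 'M[C]_(a1 * b1) -> 'M[C]_(a2 * b2)) :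
      @LOCC_instr a b a1 b1 K Lam ->
      (forall k, @LOCC_instr a1 b1 a2 b2 L (Gam k)) ->
      @LOCC_instr a b a2 b2 (K * L)
        (fun kl X => Gam (mxtens_unindex kl).1 (mxtens_unindex kl).2
                         (Lam (mxtens_unindex kl).1 X)).

Definition LOCC_channel (a b a' b' : nat)
    (Phi : 'M[C]_(a * b) -> 'M[C]_(a' * b')) : Prop :=
  exists (K : nat) (Lam : 'I_K -> 'M[C]_(a * b) -> 'M[C]_(a' * b')),
    @LOCC_instr a b a' b' K Lam /\ forall X, Phi X = \sum_(k < K) Lam k X.

(* An entanglement measure: E dX dY rho = E_{X:Y}(rho) for every bipartition
   with dim X = dX, dim Y = dY. *)
Definition entanglement_measure
    (E : forall dX dY : nat, 'M[C]_(dX * dY) -> R) : Prop :=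
  [/\ forall dX dY (rho : 'M[C]_(dX * dY)), is_state rho -> 0 <= E dX dY rho,
      forall dX dY (rho : 'M[C]_(dX * dY)),
        is_state rho -> @separable_state dX dY rho -> E dX dY rho = 0 &
      forall dX dY dX' dY' (Phi : 'M[C]_(dX * dY) -> 'M[C]_(dX' * dY'))
             (rho : 'M[C]_(dX * dY)),
        @LOCC_channel dX dY dX' dY' Phi -> is_state rho -> E dX' dY' (Phi rho) <= E dX dY rho].

(* Measurement interaction V_A (x) I_B : A B -> (A B) A', with the basis
   |s_k> = col k U of A:  (V_A (x) I_B) |s_k>|y> = (|s_k>|y>)|k>, i.e. its
   matrix entry at row ((x,y),k), column (x',y') is
   <x|s_k><s_k|x'> * delta_{y y'}. *)
Definition VA (a b : nat) (U : 'M[C]_a) : 'M[C]_(a * b * a, a * b) :=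
  \matrix_(i, j)
    (let k := (mxtens_unindex i).2 in
     let x := (mxtens_unindex (mxtens_unindex i).1).1 in
     let y := (mxtens_unindex (mxtens_unindex i).1).2 in
     let x' := (mxtens_unindex j).1 in
     let y' := (mxtens_unindex j).2 in
     U x k * (U x' k)^* * (y == y')%:R).

(* V_A (x) V_B : A B -> (A B) (A' B'), bases col k U of A and col l W of B:
   entry at row ((x,y),(k,l)), column (x',y') is
   <x|s_k><s_k|x'> * <y|t_l><t_l|y'>. *)
Definition VAB (a b : nat) (U : 'M[C]_a) (W : 'M[C]_b) :
    'M[C]_(a * b * (a * b), a * b) :=
  \matrix_(i, j)
    (let k := (mxtens_unindex (mxtens_unindex i).2).1 in
     let l := (mxtens_unindex (mxtens_unindex i).2).2 in
     let x := (mxtens_unindex (mxtens_unindex i).1).1 in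
     let y := (mxtens_unindex (mxtens_unindex i).1).2 in
     let x' := (mxtens_unindex j).1 in
     let y' := (mxtens_unindex j).2 in
     U x k * (U x' k)^* * (W y l * (W y' l)^*)).

(* Q^A_E(rho) = min over orthonormal bases of A of E_{AB:A'}(V rho V^dagger)
   (taken as an infimum). *)
Definition QA (E : forall dX dY : nat, 'M[C]_(dX * dY) -> R) (a b : nat)
    (rho : 'M[C]_(a * b)) : R :=
  inf (fun q => exists U : 'M[C]_a, unitary_mx U /\
         q = E (a * b)%N a (@VA a b U *m rho *m adjmx (@VA a b U))).

(* Q^{AB}_E(rho) = min over orthonormal bases of A and B of
   E_{AB:A'B'}(V rho V^dagger) (taken as an infimum). *)
Definition QAB (E : forall dX dY : nat, 'M[C]_(dX * dY) -> R) (a b : nat)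
    (rho : 'M[C]_(a * b)) : R :=
  inf (fun q => exists (U : 'M[C]_a) (W : 'M[C]_b),
         unitary_mx U /\ unitary_mx W /\
         q = E (a * b)%N (a * b)%N (@VAB a b U W *m rho *m adjmx (@VAB a b U W))).

(* The maximally correlated operator
   sum_{i,j < n} r_ij |a_i><a_j| (x) |b_i><b_j|, n = min(dim A, dim B),
   with |a_i> = col i UA, |b_j> = col j UB. *)
Definition mcstate (a b : nat) (UA : 'M[C]_a) (UB : 'M[C]_b)
    (r : 'M[C]_(minn a b)) : 'M[C]_(a * b) :=
  \sum_(i < minn a b) \sum_(j < minn a b)
    r i j *: tensmx
      (col (widen_ord (geq_minl a b) i) UA
         *m adjmx (col (widen_ord (geq_minl a b) j) UA))
      (col (widen_ord (geq_minr a b) i) UB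
         *m adjmx (col (widen_ord (geq_minr a b) j) UB)).

End Quantum.

Arguments QA {R} E a b rho.
Arguments QAB {R} E a b rho.

(* Main.v *)
Require Import Defs.
From mathcomp Require Import all_boot all_algebra.
From mathcomp Require Import classical_sets reals.
From mathcomp.real_closed Require Import complex mxtens.
From mathcomp Require Import ring.
Set Implicit Arguments.
Unset Strict Implicit.
Unset Printing Implicit Defensive.
Import GRing.Theory Num.Theory.
Local Open Scope ring_scope.

Section Q.
Variable R : realType.
Local Notation C := (R[i]).

Lemma adjmxK m n (A : 'M[C]_(m,n)) : adjmx (adjmx A) = A.
Proof. by apply/matrixP=> i j; rewrite !mxE conjCK. Qed.

Lemma adjmx_mul m n p (A : 'M[C]_(m,n)) (B : 'M[C]_(n,p)) :
  adjmx (A *m B) = adjmx B *m adjmx A.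
Proof.
apply/matrixP=> i j; rewrite !mxE rmorph_sum; apply: eq_bigr=> k _.
by rewrite !mxE rmorphM mulrC.
Qed.

Lemma adjmxZ m n (c : C) (A : 'M[C]_(m,n)) : adjmx (c *: A) = c^* *: adjmx A.
Proof. by apply/matrixP=> i j; rewrite !mxE rmorphM. Qed.

Lemma adjmxD m n (A B : 'M[C]_(m,n)) : adjmx (A + B) = adjmx A + adjmx B.
Proof. by apply/matrixP=> i j; rewrite !mxE rmorphD. Qed.

Lemma adjmx0 m n : adjmx (0 : 'M[C]_(m,n)) = 0.
Proof. by apply/matrixP=> i j; rewrite !mxE rmorph0. Qed.

Lemma adjmx_sum m n I (r : seq I) (P : pred I) (F : I -> 'M[C]_(m,n)) :
  adjmx (\sum_(i <- r | P i) F i) = \sum_(i <- r | P i) adjmx (F i).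
Proof.
elim/big_rec2: _ => [|i A B _ <-]; first exact: adjmx0.
by rewrite adjmxD.
Qed.

Lemma adjmx1 n : adjmx (1%:M : 'M[C]_n) = 1%:M.
Proof. by apply/matrixP=> i j; rewrite !mxE eq_sym; case: eqP; rewrite ?rmorph1 ?rmorph0. Qed.

Lemma adjmx_tens m n p q (A : 'M[C]_(m,n)) (B : 'M[C]_(p,q)) :
  adjmx (tensmx A B) = tensmx (adjmx A) (adjmx B).
Proof. by apply/matrixP=> i j; rewrite !mxE rmorphM. Qed.

Lemma adjmx_col n m (Q : 'M[C]_(n,m)) j : adjmx (col j Q) = row j (adjmx Q).
Proof. by apply/matrixP=> i k; rewrite !mxE. Qed.

Lemma sum_tens m n (F : 'I_(m * n) -> C) :
  \sum_(k < m * n) F k = \sum_(x < m) \sum_(y < n) F (mxtens_index (x, y)).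
Proof.
rewrite pair_big /=; apply: reindex => /=.
exists (@mxtens_unindex m n) => k _; [by rewrite mxtens_indexK; case: k | exact: mxtens_unindexK].
Qed.

Lemma unindex_eq m n (k l : 'I_(m*n)) :
  (k == l) = ((mxtens_unindex k).1 == (mxtens_unindex l).1) &&
             ((mxtens_unindex k).2 == (mxtens_unindex l).2).
Proof.
apply/eqP/andP => [->|[/eqP h1 /eqP h2]]; first by [].
by rewrite -[k]mxtens_unindexK -[l]mxtens_unindexK; congr mxtens_index; apply/injective_projections.
Qed.

Lemma tens11 m n : tensmx (1%:M : 'M[C]_m) (1%:M : 'M[C]_n) = 1%:M.
Proof.
apply/matrixP=> i j; rewrite !mxE (unindex_eq i j).
by do 2 case: eqP => _; rewrite ?mulr1 ?mulr0 ?mul0r.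
Qed.


Lemma sum_tensV (V : nmodType) m n (F : 'I_(m * n) -> V) :
  \sum_(k < m * n) F k = \sum_(x < m) \sum_(y < n) F (mxtens_index (x, y)).
Proof.
rewrite pair_big /=; apply: reindex => /=.
exists (@mxtens_unindex m n) => k _; [by rewrite mxtens_indexK; case: k | exact: mxtens_unindexK].
Qed.

Definition MC n d (r : 'M[C]_n) (psi : 'I_n -> 'cV[C]_d) : 'M[C]_d :=
  \sum_i \sum_j r i j *: (psi i *m adjmx (psi j)).

Lemma MC_mul p d n (r : 'M[C]_n) (psi : 'I_n -> 'cV[C]_d) (K : 'M[C]_(p,d)) :
  K *m MC r psi *m adjmx K = MC r (fun i => K *m psi i).
Proof.
rewrite /MC mulmx_sumr mulmx_suml; apply: eq_bigr => i _.
rewrite mulmx_sumr mulmx_suml; apply: eq_bigr => j _.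
by rewrite -scalemxAr -scalemxAl adjmx_mul !mulmxA.
Qed.

Lemma MC_scale n d (r : 'M[C]_n) (psi : 'I_n -> 'cV[C]_d) (c : C) :
  MC r (fun i => c *: psi i) = (c * c^*) *: MC r psi.
Proof.
rewrite /MC scaler_sumr; apply: eq_bigr => i _.
rewrite scaler_sumr; apply: eq_bigr => j _.
rewrite adjmxZ -scalemxAl -scalemxAr !scalerA; congr (_ *: _).
by ring.
Qed.

Lemma MC_ext n d (r : 'M[C]_n) (psi phi : 'I_n -> 'cV[C]_d) :
  (forall i, psi i = phi i) -> MC r psi = MC r phi.
Proof. by move=> h; rewrite /MC; apply: eq_bigr => i _; apply: eq_bigr => j _; rewrite !h. Qed.

Lemma MC_delta n d J (j0 : 'I_J) (r : 'M[C]_n) (psi : 'I_n -> 'cV[C]_d) :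
  \sum_(j < J) MC r (fun i => (j == j0)%:R *: psi i) = MC r psi.
Proof.
rewrite (bigD1 j0) //= big1 ?addr0.
  by rewrite MC_scale eqxx /= conjC1 mulr1 scale1r.
by move=> j /negbTE hj; rewrite MC_scale hj mul0r scale0r.
Qed.

Definition LOCC1 a b a' b' (Phi : 'M[C]_(a * b) -> 'M[C]_(a' * b')) :=
  @LOCC_instr R a b a' b' 1 (fun _ => Phi).

Lemma LOCC1_channel a b a' b' (Phi : 'M[C]_(a * b) -> 'M[C]_(a' * b')) :
  LOCC1 Phi -> LOCC_channel Phi.
Proof. by move=> h; exists 1%N, (fun _ => Phi); split => // X; rewrite big_ord1. Qed.

Lemma LOCC1_comp a b a1 b1 a2 b2 (Phi1 : 'M[C]_(a * b) -> 'M[C]_(a1 * b1))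
   (Phi2 : 'M[C]_(a1 * b1) -> 'M[C]_(a2 * b2)) :
  LOCC1 Phi1 -> LOCC1 Phi2 -> LOCC1 (fun X => Phi2 (Phi1 X)).
Proof. move=> h1 h2; exact: (@LOCC_cond R _ _ _ _ _ _ 1 1 _ (fun _ _ => Phi2) h1 (fun _ => h2)). Qed.

Lemma LOCC1_cond a b a1 b1 a2 b2 K (Lam : 'I_K -> 'M[C]_(a * b) -> 'M[C]_(a1 * b1))
   (Gam : 'I_K -> 'M[C]_(a1 * b1) -> 'M[C]_(a2 * b2)) :
  LOCC_instr Lam -> (forall k, LOCC1 (Gam k)) ->
  LOCC1 (fun X => \sum_(k < K) Gam k (Lam k X)).
Proof.
move=> hL hG.
have h := @LOCC_cond R _ _ _ _ _ _ K 1 Lam (fun k _ => Gam k) hL hG.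
have h2 := LOCC_coarse (fun _ => (ord0 : 'I_1)) h.
rewrite /LOCC1.
have -> : (fun (_ : 'I_1) (X : 'M[C]_(a * b)) => \sum_(k < K) Gam k (Lam k X)) =
   (fun l X => \sum_(k < K * 1 | ord0 == l) Gam (mxtens_unindex k).1 (Lam (mxtens_unindex k).1 X)).
  apply: boolp.funext => l; apply: boolp.funext => X.
  rewrite (ord1 l) (eq_bigl xpredT) // sum_tensV; apply: eq_bigr => k _.
  by rewrite big_ord1 mxtens_indexK.
exact: h2.
Qed.

Definition kraus p q J (K : 'I_J -> 'M[C]_(p,q)) := \sum_j adjmx (K j) *m K j = 1%:M.

Lemma locA1 a b a' J (K : 'I_J -> 'M[C]_(a',a)) : kraus K ->
  LOCC1 (fun X : 'M[C]_(a * b) => \sum_j tensmx (K j) (1%:M : 'M[C]_b) *m X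
     *m adjmx (tensmx (K j) (1%:M : 'M[C]_b))).
Proof.
move=> hK; apply: (@LOCC_localA R a b a' 1 J (fun _ j => K j)).
by rewrite big_ord1.
Qed.

Lemma locB1 a b b' J (K : 'I_J -> 'M[C]_(b',b)) : kraus K ->
  LOCC1 (fun X : 'M[C]_(a * b) => \sum_j tensmx (1%:M : 'M[C]_a) (K j) *m X
     *m adjmx (tensmx (1%:M : 'M[C]_a) (K j))).
Proof.
move=> hK; apply: (@LOCC_localB R a b b' 1 J (fun _ j => K j)).
by rewrite big_ord1.
Qed.

End Q.

Section Q.
Variable R : realType.
Local Notation C := (R[i]).

Lemma mx11_mulr p (v : 'M[C]_(p,1)) (M : 'M[C]_1) : v *m M = M 0 0 *: v.
Proof. by rewrite [M]mx11_scalar mul_mx_scalar mxE eqxx mulr1n. Qed.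

Lemma col_mul m n p (A : 'M[C]_(m,n)) (B : 'M[C]_(n,p)) j :
  col j (A *m B) = A *m col j B.
Proof. by apply/matrixP=> x y; rewrite !mxE; apply: eq_bigr => k _; rewrite !mxE. Qed.

Lemma col_orth q (Q : 'M[C]_q) : adjmx Q *m Q = 1%:M -> forall j i,
  (adjmx (col j Q) *m col i Q) = (j == i)%:R%:M.
Proof.
move=> hQ j i; rewrite adjmx_col -row_mul -col_mul hQ.
by apply/matrixP=> x y; rewrite !ord1 !mxE eqxx mulr1n.
Qed.

Lemma VAE a b (U : 'M[C]_a) x y k x' y' :
  @VA R a b U (mxtens_index (mxtens_index (x, y), k)) (mxtens_index (x', y')) =
  U x k * (U x' k)^* * (y == y')%:R.
Proof. by rewrite mxE !mxtens_indexK. Qed.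

Lemma tensvE m n (x : 'cV[C]_m) (y : 'cV[C]_n) i j (J : 'I_(1*1)) :
  (tensmx x y) (mxtens_index (i,j)) J = x i 0 * y j 0.
Proof. by rewrite mxE mxtens_indexK /=; congr (x _ _ * y _ _); apply: ord1. Qed.

Lemma VA_tens a b (U : 'M[C]_a) (x : 'cV[C]_a) (y : 'cV[C]_b) :
  @VA R a b U *m tensmx x y = \sum_(k < a) ((adjmx (col k U) *m x) 0 0) *:
     tensmx (tensmx (col k U) y) (delta_mx k 0 : 'cV[C]_a).
Proof.
apply/matrixP=> I J.
case: (mxtens_indexP I) => ij k; case: (mxtens_indexP ij) => x0 y0.
rewrite [LHS]mxE sum_tens summxE.
under eq_bigr do under eq_bigr do rewrite VAE tensvE.
under [RHS]eq_bigr do rewrite mxE tensvE tensvE.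
rewrite [in RHS](bigD1 k) //= [in RHS]big1 ?addr0; last first.
  by move=> k0 /negbTE hk; rewrite !mxE eq_sym hk /= mulr0n !mulr0.
rewrite !mxE !eqxx mulr1 mulr_suml.
apply: eq_bigr => x1 _; rewrite (bigD1 y0) //= big1 ?addr0; last first.
  by move=> y1 /negbTE hy; rewrite eq_sym hy mulr0 mul0r.
by rewrite !mxE eqxx /= mulr1; ring.
Qed.

Lemma VABE a b (U : 'M[C]_a) (W : 'M[C]_b) x y k l x' y' :
  @VAB R a b U W (mxtens_index (mxtens_index (x, y), mxtens_index (k, l)))
     (mxtens_index (x', y')) =
  U x k * (U x' k)^* * (W y l * (W y' l)^*).
Proof. by rewrite mxE !mxtens_indexK. Qed.

Lemma VAB_tens a b (U : 'M[C]_a) (W : 'M[C]_b) (x : 'cV[C]_a) (y : 'cV[C]_b) :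
  @VAB R a b U W *m tensmx x y = \sum_(k < a) \sum_(l < b)
     (((adjmx (col k U) *m x) 0 0) * ((adjmx (col l W) *m y) 0 0)) *:
     tensmx (tensmx (col k U) (col l W))
        (tensmx (delta_mx k 0 : 'cV[C]_a) (delta_mx l 0 : 'cV[C]_b)).
Proof.
apply/matrixP=> I J.
case: (mxtens_indexP I) => ij kl; case: (mxtens_indexP ij) => x0 y0.
case: (mxtens_indexP kl) => k l.
rewrite [LHS]mxE sum_tens summxE.
under eq_bigr do under eq_bigr do rewrite VABE tensvE.
under [RHS]eq_bigr do rewrite summxE.
under [RHS]eq_bigr do under eq_bigr do rewrite mxE tensvE tensvE tensvE.
rewrite [in RHS](bigD1 k) //= [X in _ = _ + X]big1 ?addr0; last first.
  move=> k0 /negbTE hk; rewrite big1 // => l0 _.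
  by rewrite !mxE eq_sym hk /= mulr0n mul0r !mulr0.
rewrite [in RHS](bigD1 l) //= [X in _ = _ + X]big1 ?addr0; last first.
  by move=> l0 /negbTE hl; rewrite !mxE eq_sym hl /= mulr0n !mulr0.
rewrite !mxE !eqxx /= !mulr1.
rewrite -mulrA mulr_suml; apply: eq_bigr => x1 _.
rewrite !mxE mulr_suml mulr_sumr; apply: eq_bigr => y1 _.
rewrite !mxE; ring.
Qed.

Lemma unitary_colnorm a (U : 'M[C]_a) k : unitary_mx U ->
  \sum_x (U x k)^* * U x k = 1.
Proof.
rewrite /unitary_mx => hU; have := congr1 (fun M : 'M[C]_a => M k k) hU; rewrite /= !mxE eqxx mulr1n => <-.
by apply: eq_bigr => x _; rewrite mxE.
Qed.

Lemma unitary_rows a (U : 'M[C]_a) x1 x2 : unitary_mx U ->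
  \sum_k U x1 k * (U x2 k)^* = (x1 == x2)%:R.
Proof.
rewrite /unitary_mx => hU; have h := mulmx1C hU.
have := congr1 (fun M : 'M[C]_a => M x1 x2) h; rewrite /= !mxE => <-.
by apply: eq_bigr => k _; rewrite mxE.
Qed.

Lemma sum_dd n (y1 y2 : 'I_n) : \sum_(y < n) ((y == y1)%:R * (y == y2)%:R : C) = (y1 == y2)%:R.
Proof.
rewrite (bigD1 y1) //= big1 ?addr0 => [|y /negbTE ->]; last by rewrite mul0r.
by rewrite eqxx mul1r eq_sym.
Qed.

Lemma VA_iso a b (U : 'M[C]_a) : unitary_mx U ->
  adjmx (@VA R a b U) *m @VA R a b U = 1%:M.
Proof.
move=> hU; apply/matrixP=> j1 j2.
case: (mxtens_indexP j1) => x1 y1; case: (mxtens_indexP j2) => x2 y2.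
rewrite mxE sum_tens (sum_tensV (fun ij => \sum_(k < a) _)).
rewrite mxE (unindex_eq (mxtens_index (x1, y1))) !mxtens_indexK /=.
under eq_bigr do under eq_bigr do under eq_bigr do rewrite mxE VAE VAE.
have e i i0 i1 : (U i i1 * (U x1 i1)^* * (i0 == y1)%:R)^* *
           (U i i1 * (U x2 i1)^* * (i0 == y2)%:R) =
   ((U i i1)^* * U i i1 * (U x1 i1 * (U x2 i1)^*)) * ((i0 == y1)%:R * (i0 == y2)%:R).
  by rewrite !rmorphM rmorph_nat /= conjCK; ring.
under eq_bigr do under eq_bigr do under eq_bigr do rewrite e.
under eq_bigr do rewrite exchange_big.
under eq_bigr do under eq_bigr do rewrite -mulr_sumr sum_dd.
rewrite exchange_big /=.
under eq_bigr do rewrite -mulr_suml -mulr_suml unitary_colnorm // mul1r.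
by rewrite -mulr_suml unitary_rows // -natrM mulnb.
Qed.

Lemma unit_sum2 a (U : 'M[C]_a) x1 x2 : unitary_mx U ->
  \sum_x \sum_k ((U x k)^* * U x k * (U x1 k * (U x2 k)^*)) = (x1 == x2)%:R.
Proof.
move=> hU; rewrite exchange_big /=.
under eq_bigr do rewrite -mulr_suml unitary_colnorm // mul1r.
exact: unitary_rows.
Qed.

Lemma VAB_iso a b (U : 'M[C]_a) (W : 'M[C]_b) : unitary_mx U -> unitary_mx W ->
  adjmx (@VAB R a b U W) *m @VAB R a b U W = 1%:M.
Proof.
move=> hU hW; apply/matrixP=> j1 j2.
case: (mxtens_indexP j1) => x1 y1; case: (mxtens_indexP j2) => x2 y2.
rewrite mxE sum_tens (sum_tensV (fun ij => \sum_(k < a * b) _)).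
rewrite mxE (unindex_eq (mxtens_index (x1, y1))) !mxtens_indexK /=.
under eq_bigr do under eq_bigr do rewrite sum_tens.
under eq_bigr do under eq_bigr do under eq_bigr do under eq_bigr do rewrite mxE VABE VABE.
have e i i0 i1 i2 : (U i i1 * (U x1 i1)^* * (W i0 i2 * (W y1 i2)^*))^* *
   (U i i1 * (U x2 i1)^* * (W i0 i2 * (W y2 i2)^*)) =
   ((U i i1)^* * U i i1 * (U x1 i1 * (U x2 i1)^*)) *
   ((W i0 i2)^* * W i0 i2 * (W y1 i2 * (W y2 i2)^*)).
  by rewrite !rmorphM /= !conjCK; ring.
under eq_bigr do under eq_bigr do under eq_bigr do under eq_bigr do rewrite e.
under eq_bigr do under eq_bigr do under eq_bigr do rewrite -mulr_sumr.
under eq_bigr do rewrite exchange_big.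
under eq_bigr do under eq_bigr do rewrite -mulr_sumr unit_sum2 //.
under eq_bigr do rewrite -mulr_suml.
by rewrite -mulr_suml unit_sum2 // -natrM mulnb.
Qed.

Lemma is_state_iso p q (V : 'M[C]_(q,p)) (rho : 'M[C]_p) :
  is_state rho -> adjmx V *m V = 1%:M -> is_state (V *m rho *m adjmx V).
Proof.
move=> [hpsd htr] hV; split.
  move=> v; have := hpsd (v *m V).
  by rewrite adjmx_mul !mulmxA.
by rewrite mxtrace_mulC mulmxA hV mul1mx.
Qed.

Definition alpha a b (UA : 'M[C]_a) (i : 'I_(minn a b)) : 'cV[C]_a :=
  col (widen_ord (geq_minl a b) i) UA.
Definition beta a b (UB : 'M[C]_b) (i : 'I_(minn a b)) : 'cV[C]_b :=
  col (widen_ord (geq_minr a b) i) UB.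

Lemma adjmx_tensv m n (x : 'cV[C]_m) (y : 'cV[C]_n) :
  adjmx (tensmx x y : 'cV_(m*n)) = (tensmx (adjmx x) (adjmx y) : 'rV_(m*n)).
Proof. exact: (@adjmx_tens R m 1 n 1 x y). Qed.

Lemma tens_outer m n (x1 x2 : 'cV[C]_m) (y1 y2 : 'cV[C]_n) :
  (tensmx x1 y1 : 'cV_(m*n)) *m adjmx (tensmx x2 y2 : 'cV_(m*n)) =
  tensmx (x1 *m adjmx x2) (y1 *m adjmx y2).
Proof. rewrite adjmx_tensv; exact: (@tensmx_mul _ m 1 n 1 m n x1 y1 (adjmx x2) (adjmx y2)). Qed.

Lemma mcstate_MC a b (UA : 'M[C]_a) (UB : 'M[C]_b) (r : 'M[C]_(minn a b)) :
  mcstate UA UB r = MC r (fun i => tensmx (alpha UA i) (beta UB i)).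
Proof.
rewrite /mcstate /MC; apply: eq_bigr => i _; apply: eq_bigr => j _.
by rewrite tens_outer.
Qed.

Lemma tens_apply m n m' n' (A : 'M[C]_(m',m)) (B : 'M[C]_(n',n)) (x : 'cV[C]_m) (y : 'cV[C]_n) :
  tensmx A B *m (tensmx x y : 'cV_(m*n)) = (tensmx (A *m x) (B *m y) : 'cV_(m'*n')).
Proof. exact: (@tensmx_mul _ m' m n' n 1 1 A B x y). Qed.

Lemma mulmx_adj_cols q (Q : 'M[C]_q) :
  Q *m adjmx Q = \sum_j col j Q *m adjmx (col j Q).
Proof.
apply/matrixP=> x y; rewrite !mxE summxE; apply: eq_bigr => j _.
by rewrite !mxE big_ord1 !mxE.
Qed.

Lemma mulmx_scal p (v : 'cV[C]_p) (c : C) : v *m c%:M = c *: v.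
Proof. by rewrite mul_mx_scalar. Qed.

Section Relab.
Variables (n p q : nat) (v : 'I_n -> 'cV[C]_p) (Q : 'M[C]_q) (hq : (n <= q)%N) (i0 : 'I_n).

Definition relT := \sum_(i < n) v i *m adjmx (col (widen_ord hq i) Q).
Definition relab (j : 'I_q) : 'M[C]_(p,q) :=
  if (j == 0 :> nat) then relT else if (n <= j)%N then v i0 *m adjmx (col j Q) else 0.

Hypothesis hQ : unitary_mx Q.

Lemma relab_act i j : relab j *m col (widen_ord hq i) Q = ((j == 0 :> nat))%:R *: v i.
Proof.
rewrite /relab; case: eqP => [_|hj].
  rewrite /relT mulmx_suml (bigD1 i) //= big1 ?addr0.
    by rewrite -mulmxA col_orth // eqxx mulmx_scal.
  move=> i' hi; rewrite -mulmxA col_orth // mulmx_scal.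
  suff -> : (widen_ord hq i' == widen_ord hq i) = false by rewrite scale0r.
  by apply/negbTE; apply: contra hi => /eqP/(congr1 val) /= h; apply/eqP/val_inj.
case: ifP => hn; last by rewrite mul0mx scale0r.
rewrite -mulmxA col_orth //.
suff -> : (j == widen_ord hq i) = false by rewrite mulmx_scal scale0r scale0r.
apply/negbTE/eqP => /(congr1 val) /= h; move: hn; rewrite h leqNgt ltn_ord.
by [].
Qed.

Hypothesis hv : forall i j, adjmx (v i) *m v j = (i == j)%:R%:M.

Lemma relT_norm : adjmx relT *m relT =
  \sum_(i < n) col (widen_ord hq i) Q *m adjmx (col (widen_ord hq i) Q).
Proof.
rewrite /relT adjmx_sum mulmx_suml; apply: eq_bigr => i _.
rewrite mulmx_sumr (bigD1 i) //= big1 ?addr0.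
  by rewrite adjmx_mul adjmxK !mulmxA -(mulmxA _ (adjmx (v i))) hv eqxx mulmx_scal scale1r.
move=> i' /negbTE hi; rewrite adjmx_mul adjmxK !mulmxA -(mulmxA _ (adjmx (v i))) hv eq_sym hi.
by rewrite mulmx_scal scale0r mul0mx.
Qed.

Lemma relab_kraus : kraus relab.
Proof.
have q0 : (0 < q)%N by apply: leq_trans hq; apply: leq_ltn_trans (ltn_ord i0).
rewrite /kraus (bigID (fun j : 'I_q => (j < n)%N)) /=.
rewrite (bigD1 (Ordinal q0)) /=; last by apply: leq_ltn_trans (ltn_ord i0).
rewrite big1 ?addr0; last first.
  move=> j /andP [hj hjn]; rewrite /relab.
  have -> : (j == 0 :> nat) = false.
    by apply/negbTE; apply: contra hjn => /eqP h; apply/eqP/val_inj.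
  by rewrite leqNgt hj /= mulmx0.
rewrite {1}/relab /= relT_norm.
under [X in _ + X = _]eq_bigr => j hj.
  rewrite /relab.
  have -> : (j == 0 :> nat) = false.
    by apply/negbTE; apply: contra hj => /eqP ->; apply: leq_ltn_trans (ltn_ord i0).
  rewrite leqNgt hj /= adjmx_mul adjmxK mulmxA -(mulmxA _ (adjmx (v i0))) hv eqxx mulmx_scal scale1r.
  over.
have hQQ : Q *m adjmx Q = 1%:M := mulmx1C hQ.
rewrite -hQQ mulmx_adj_cols [in RHS](bigID (fun j : 'I_q => (j < n)%N)) /=.
by rewrite -(big_ord_narrow (F := fun j => col j Q *m adjmx (col j Q)) hq).
Qed.
End Relab.

Definition Nq q := #|{ffun 'I_q -> bool}|.
Definition fm q (m : 'I_(Nq q)) : {ffun 'I_q -> bool} := enum_val m.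
Definition sg (b : bool) : C := if b then -1 else 1.
Definition srow q (m : 'I_(Nq q)) : 'rV[C]_q := \row_k sg (fm m k).

Lemma sg_conj b : (sg b)^* = sg b.
Proof. by case: b; rewrite /sg ?rmorphN rmorph1. Qed.
Lemma sg_sq b : sg b * sg b = 1.
Proof. by case: b; rewrite /sg ?mulrNN mulr1. Qed.

Lemma Nq_gt0 q : (0 < Nq q)%N.
Proof. by apply/card_gt0P; exists [ffun=> true]. Qed.

Lemma sg_orth q (k k' : 'I_q) :
  \sum_(m < Nq q) sg (fm m k) * sg (fm m k') = (k == k')%:R * (Nq q)%:R.
Proof.
rewrite /fm -(big_enum_val (fun f : {ffun 'I_q -> bool} => sg (f k) * sg (f k'))) /=.
case: eqP => [<-|hk].
  under eq_bigr do rewrite sg_sq.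
  by rewrite sumr_const mul1r.
rewrite mul0r.
pose fl (f : {ffun 'I_q -> bool}) := [ffun x => if x == k then ~~ f x else f x].
have flK : involutive fl.
  by move=> f; apply/ffunP=> x; rewrite !ffunE; case: eqP => //; rewrite negbK.
set S := \sum_(_ in _) _.
have hS : S = - S.
  rewrite {1}/S (reindex_inj (inv_inj flK)) /S -sumrN; apply: eq_bigr => f _.
  rewrite !ffunE eqxx; case: eqP => [h|_]; first by case: hk; rewrite h.
  by case: (f k); rewrite /sg /= ?mulN1r ?mul1r ?opprK.
have : S *+ 2 == 0 by rewrite mulr2n {2}hS subrr.
by rewrite mulrn_eq0 /= => /eqP.
Qed.

Definition tN q : C := sqrtC ((Nq q)%:R^-1).

Lemma tN_conj q : (tN q)^* = tN q.
Proof. by apply: geC0_conj; rewrite sqrtC_ge0 invr_ge0 ler0n. Qed.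

Lemma tN_norm q : tN q * (tN q)^* = (Nq q)%:R^-1.
Proof. by rewrite tN_conj -expr2 sqrtCK. Qed.

Lemma sum_tN q d (X : 'M[C]_d) :
  \sum_(m < Nq q) ((tN q * (tN q)^*) *: X) = X.
Proof.
rewrite -scaler_suml sumr_const card_ord tN_norm -(mulr_natr ((Nq q)%:R^-1)) mulVf ?scale1r //.
by rewrite pnatr_eq0 -lt0n Nq_gt0.
Qed.

Lemma srow_sum q : \sum_(m < Nq q) adjmx (srow m) *m srow m = (Nq q)%:R%:M.
Proof.
apply/matrixP=> k k'; rewrite summxE.
rewrite (eq_bigr (fun m => sg (fm m k) * sg (fm m k'))); last first.
  by move=> m _; rewrite mxE big_ord1 !mxE sg_conj.
rewrite mxE.
by rewrite sg_orth mulr_natl.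
Qed.

Lemma gfam_kraus q q' (P : 'M[C]_(q, q')) : adjmx P *m P = 1%:M ->
  \sum_(m < Nq q) adjmx (tN q *: (srow m *m P)) *m (tN q *: (srow m *m P)) = 1%:M.
Proof.
move=> hP.
under eq_bigr do rewrite adjmxZ -scalemxAl -scalemxAr scalerA adjmx_mul
   -mulmxA (mulmxA (adjmx (srow _))).
rewrite -scaler_sumr -mulmx_sumr -mulmx_suml srow_sum mul_scalar_mx -scalemxAr hP.
rewrite scalerA [(tN q)^* * _]mulrC tN_norm mulVf ?scale1r //.
by rewrite pnatr_eq0 -lt0n Nq_gt0.
Qed.

Definition contractL a b (g : 'rV[C]_a) : 'M[C]_(b, a * b) :=
  \matrix_(y, j) (g 0 (mxtens_unindex j).1 * (y == (mxtens_unindex j).2)%:R).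
Definition contractR a b (g : 'rV[C]_b) : 'M[C]_(a, a * b) :=
  \matrix_(x, j) (g 0 (mxtens_unindex j).2 * (x == (mxtens_unindex j).1)%:R).

Lemma contractL_tens a b (g : 'rV[C]_a) (x : 'cV[C]_a) (y : 'cV[C]_b) :
  contractL b g *m (tensmx x y : 'cV_(a*b)) = (g *m x) 0 0 *: y.
Proof.
apply/matrixP=> y0 z; rewrite [z]ord1 !mxE sum_tens mulr_suml.
apply: eq_bigr => x1 _; rewrite (bigD1 y0) //= big1 ?addr0.
  by rewrite tensvE !mxE !mxtens_indexK eqxx mulr1; ring.
by move=> y1 /negbTE hy; rewrite !mxE !mxtens_indexK /= eq_sym hy mulr0 mul0r.
Qed.

Lemma contractR_tens a b (g : 'rV[C]_b) (x : 'cV[C]_a) (y : 'cV[C]_b) :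
  contractR a g *m (tensmx x y : 'cV_(a*b)) = (g *m y) 0 0 *: x.
Proof.
apply/matrixP=> x0 z; rewrite [z]ord1 !mxE sum_tens mulr_suml exchange_big /=.
apply: eq_bigr => y1 _; rewrite (bigD1 x0) //= big1 ?addr0.
  by rewrite tensvE !mxE !mxtens_indexK eqxx mulr1; ring.
by move=> x1 /negbTE hx; rewrite !mxE !mxtens_indexK /= eq_sym hx mulr0 mul0r.
Qed.

Lemma contractL_kraus a b M (G : 'I_M -> 'rV[C]_a) :
  \sum_m adjmx (G m) *m G m = 1%:M ->
  \sum_m adjmx (contractL b (G m)) *m contractL b (G m) = 1%:M.
Proof.
move=> hG; apply/matrixP=> j1 j2.
case: (mxtens_indexP j1) => x1 y1; case: (mxtens_indexP j2) => x2 y2.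
have := congr1 (fun M : 'M[C]_a => M x1 x2) hG.
rewrite /= !mxE summxE => hG'.
rewrite (unindex_eq (mxtens_index (x1, y1))) !mxtens_indexK /= -mulnb natrM -hG' mulr_suml.
rewrite summxE; apply: eq_bigr => m _.
rewrite mxE [X in _ = X * _]mxE big_ord1 (bigD1 y1) //= big1 ?addr0.
  rewrite !mxE !mxtens_indexK /= eqxx rmorphM rmorph_nat /=; ring.
by move=> y /negbTE hy; rewrite !mxE !mxtens_indexK /= hy rmorphM rmorph_nat /= mulr0 mul0r.
Qed.

Lemma contractR_kraus a b M (G : 'I_M -> 'rV[C]_b) :
  \sum_m adjmx (G m) *m G m = 1%:M ->
  \sum_m adjmx (contractR a (G m)) *m contractR a (G m) = 1%:M.
Proof.
move=> hG; apply/matrixP=> j1 j2.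
case: (mxtens_indexP j1) => x1 y1; case: (mxtens_indexP j2) => x2 y2.
have := congr1 (fun M : 'M[C]_b => M y1 y2) hG.
rewrite /= !mxE summxE => hG'.
rewrite (unindex_eq (mxtens_index (x1, y1))) !mxtens_indexK /= -mulnb natrM -hG' mulr_sumr.
rewrite summxE; apply: eq_bigr => m _.
rewrite mxE [X in _ = _ * X]mxE big_ord1 (bigD1 x1) //= big1 ?addr0.
  rewrite !mxE !mxtens_indexK /= eqxx rmorphM rmorph_nat /=; ring.
by move=> x /negbTE hx; rewrite !mxE !mxtens_indexK /= hx rmorphM rmorph_nat /= mulr0 mul0r.
Qed.

Lemma tensmxZl m n p q c (A : 'M[C]_(m,n)) (B : 'M[C]_(p,q)) :
  tensmx (c *: A) B = c *: tensmx A B.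
Proof. by apply/matrixP=> i j; rewrite !mxE mulrA. Qed.

Lemma tensmxZr m n p q c (A : 'M[C]_(m,n)) (B : 'M[C]_(p,q)) :
  tensmx A (c *: B) = c *: tensmx A B.
Proof. by apply/matrixP=> i j; rewrite !mxE mulrCA. Qed.

Lemma tensmx_suml m n p q I (r : seq I) (P : pred I) (A : I -> 'M[C]_(m,n)) (B : 'M[C]_(p,q)) :
  tensmx (\sum_(i <- r | P i) A i) B = \sum_(i <- r | P i) tensmx (A i) B.
Proof.
apply/matrixP=> i j; rewrite !mxE !summxE mulr_suml; apply: eq_bigr => k _.
by rewrite !mxE.
Qed.

Lemma tensmx_sumr m n p q I (r : seq I) (P : pred I) (A : 'M[C]_(m,n)) (B : I -> 'M[C]_(p,q)) :
  tensmx A (\sum_(i <- r | P i) B i) = \sum_(i <- r | P i) tensmx A (B i).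
Proof.
apply/matrixP=> i j; rewrite !mxE !summxE mulr_sumr; apply: eq_bigr => k _.
by rewrite !mxE.
Qed.

Lemma diag_vec q (d : 'rV[C]_q) (z : 'cV[C]_q) :
  diag_mx d *m z = \sum_k (d 0 k * z k 0) *: (delta_mx k 0 : 'cV[C]_q).
Proof.
apply/matrixP=> k' j; rewrite [j]ord1 mul_diag_mx summxE !mxE.
rewrite (bigD1 k') //= big1 ?addr0.
  by rewrite !mxE !eqxx mulr1.
by move=> k /negbTE hk; rewrite !mxE eq_sym hk mulr0.
Qed.

Lemma mul_cols p q (W : 'M[C]_(p,q)) (z : 'cV[C]_q) :
  W *m z = \sum_l z l 0 *: col l W.
Proof.
apply/matrixP=> x j; rewrite [j]ord1 summxE !mxE; apply: eq_bigr => l _.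
by rewrite !mxE mulrC.
Qed.

Lemma adj_col_vec q (U : 'M[C]_q) (x : 'cV[C]_q) k :
  (adjmx (col k U) *m x) 0 0 = (adjmx U *m x) k 0.
Proof. by rewrite !mxE; apply: eq_bigr => j _; rewrite !mxE. Qed.

Lemma srow_col q (U : 'M[C]_q) m k : unitary_mx U ->
  ((tN q *: (srow m *m adjmx U)) *m col k U) 0 0 = tN q * sg (fm m k).
Proof.
move=> hU; rewrite -scalemxAl -mulmxA -col_mul hU mxE; congr (_ * _).
rewrite mxE (bigD1 k) //= big1 ?addr0.
  by rewrite !mxE eqxx mulr1.
by move=> j /negbTE hj; rewrite !mxE hj mulr0.
Qed.

Lemma diag_sq q m : diag_mx (srow m) *m diag_mx (srow m) = 1%:M :> 'M[C]_q.
Proof.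
apply/matrixP=> i j; rewrite mul_diag_mx !mxE.
by case: eqP => [->|_]; rewrite ?sg_sq ?mulr0 // mulr1n mulr1 sg_sq.
Qed.

Lemma adj_diag q m : adjmx (diag_mx (srow m)) = diag_mx (srow m) :> 'M[C]_q.
Proof.
apply/matrixP=> i j; rewrite !mxE eq_sym.
by case: eqP => [->|_]; rewrite ?rmorph0 ?mulr0n // !mulr1n sg_conj.
Qed.

Lemma MC_delta0 n d q (hq0 : (0 < q)%N) (r : 'M[C]_n) (psi : 'I_n -> 'cV[C]_d) :
  \sum_(j < q) MC r (fun i => ((j : nat) == 0)%:R *: psi i) = MC r psi.
Proof.
rewrite -(MC_delta (Ordinal hq0) r psi); apply: eq_bigr => j _.
by congr MC; apply: boolp.funext => i; congr (_%:R *: _).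
Qed.

Lemma relabA_MC n p p' s (v : 'I_n -> 'cV[C]_p') (Q : 'M[C]_p) (hq : (n <= p)%N)
   (i0 : 'I_n) (r : 'M[C]_n) (y : 'I_n -> 'cV[C]_s) : unitary_mx Q ->
  \sum_j tensmx (relab v Q hq i0 j) (1%:M : 'M[C]_s) *m
     MC r (fun i => tensmx (col (widen_ord hq i) Q) (y i))
     *m adjmx (tensmx (relab v Q hq i0 j) (1%:M : 'M[C]_s))
  = MC r (fun i => tensmx (v i) (y i)).
Proof.
move=> hQ.
have q0 : (0 < p)%N by apply: leq_trans hq; apply: leq_ltn_trans (ltn_ord i0).
rewrite -(MC_delta0 q0 r (fun i => tensmx (v i) (y i))); apply: eq_bigr => j _.
rewrite MC_mul; apply: MC_ext => i.
by rewrite tens_apply relab_act // mul1mx tensmxZl.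
Qed.

Lemma relabB_MC n p p' s (v : 'I_n -> 'cV[C]_p') (Q : 'M[C]_p) (hq : (n <= p)%N)
   (i0 : 'I_n) (r : 'M[C]_n) (y : 'I_n -> 'cV[C]_s) : unitary_mx Q ->
  \sum_j tensmx (1%:M : 'M[C]_s) (relab v Q hq i0 j) *m
     MC r (fun i => tensmx (y i) (col (widen_ord hq i) Q))
     *m adjmx (tensmx (1%:M : 'M[C]_s) (relab v Q hq i0 j))
  = MC r (fun i => tensmx (y i) (v i)).
Proof.
move=> hQ.
have q0 : (0 < p)%N by apply: leq_trans hq; apply: leq_ltn_trans (ltn_ord i0).
rewrite -(MC_delta0 q0 r (fun i => tensmx (y i) (v i))); apply: eq_bigr => j _.
rewrite MC_mul; apply: MC_ext => i.
by rewrite tens_apply relab_act // mul1mx tensmxZr.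
Qed.

Definition ortho n p (v : 'I_n -> 'cV[C]_p) :=
  forall i j, adjmx (v i) *m v j = (i == j)%:R%:M.

Lemma widen_eq n q (hq : (n <= q)%N) (i j : 'I_n) :
  (widen_ord hq i == widen_ord hq j) = (i == j).
Proof. by apply/eqP/eqP => [/(congr1 val) /= h|->]; first exact: val_inj. Qed.

Lemma ortho_col q n (Q : 'M[C]_q) (hq : (n <= q)%N) : unitary_mx Q ->
  ortho (fun i => col (widen_ord hq i) Q).
Proof. by move=> hQ i j; rewrite col_orth // widen_eq. Qed.

Lemma unitary1 q : unitary_mx (1%:M : 'M[C]_q).
Proof. by rewrite /unitary_mx adjmx1 mul1mx. Qed.

Lemma ortho_delta q n (hq : (n <= q)%N) :
  ortho (fun i => (delta_mx (widen_ord hq i) 0 : 'cV[C]_q)).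
Proof. by move=> i j; rewrite -!col1; apply: ortho_col; apply: unitary1. Qed.

Lemma ortho_tens n p s (v : 'I_n -> 'cV[C]_p) (w : 'I_n -> 'cV[C]_s) :
  ortho v -> ortho w -> ortho (fun i => (tensmx (v i) (w i) : 'cV_(p * s))).
Proof.
move=> hv hw i j; rewrite adjmx_tensv.
rewrite (@tensmx_mul _ 1 p 1 s 1 1 (adjmx (v i)) (adjmx (w i)) (v j) (w j)) hv hw.
apply/matrixP=> x y; rewrite !mxE !ord1 /=.
by case: (i == j); rewrite /= ?mulr1 ?mulr0n ?mul0r.
Qed.

Lemma kraus_mulr J p q q' (K : 'I_J -> 'M[C]_(p,q)) (V : 'M[C]_(q,q')) :
  kraus K -> adjmx V *m V = 1%:M -> kraus (fun j => K j *m V).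
Proof.
rewrite /kraus => hK hV.
under eq_bigr do rewrite adjmx_mul -mulmxA (mulmxA (adjmx (K _))).
by rewrite -mulmx_sumr -mulmx_suml hK mul1mx.
Qed.

Lemma stepA_vec a b (U : 'M[C]_a) (x : 'cV[C]_a) (y : 'cV[C]_b) m : unitary_mx U ->
  tensmx (contractL b (tN a *: (srow m *m adjmx U))) (1%:M : 'M[C]_a) *m
    (@VA R a b U *m tensmx x y : 'cV_(a * b * a))
  = tN a *: (tensmx y (diag_mx (srow m) *m (adjmx U *m x)) : 'cV_(b * a)).
Proof.
move=> hU; rewrite VA_tens mulmx_sumr diag_vec tensmx_sumr scaler_sumr.
apply: eq_bigr => k _.
rewrite -scalemxAr tens_apply mul1mx contractL_tens srow_col // tensmxZl tensmxZr.
rewrite !scalerA adj_col_vec mxE; congr (_ *: _); rewrite [srow m 0 k]mxE; ring.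
Qed.

Lemma stepA_gam n p q s (v : 'I_n -> 'cV[C]_p) (Q : 'M[C]_q) (hq : (n <= q)%N) (i0 : 'I_n)
   (U : 'M[C]_q) m (y : 'cV[C]_s) i j : unitary_mx Q -> unitary_mx U ->
  tensmx (1%:M : 'M[C]_s) (relab v Q hq i0 j *m (U *m diag_mx (srow m))) *m
    (tensmx y (diag_mx (srow m) *m (adjmx U *m col (widen_ord hq i) Q)) : 'cV_(s * q))
  = ((j : nat) == 0)%:R *: (tensmx y (v i) : 'cV_(s * p)).
Proof.
move=> hQ hU; rewrite tens_apply mul1mx -!mulmxA (mulmxA (diag_mx _)) diag_sq mul1mx.
by rewrite (mulmxA U) (mulmx1C hU) mul1mx relab_act // tensmxZr.
Qed.

Lemma unitary_UD q (U : 'M[C]_q) m : unitary_mx U -> adjmx (U *m diag_mx (srow m)) *m (U *m diag_mx (srow m)) = 1%:M.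
Proof.
move=> hU; rewrite adjmx_mul adj_diag -mulmxA (mulmxA (adjmx U)) hU mul1mx.
exact: diag_sq.
Qed.

Lemma MC_scaleX n d (r : 'M[C]_n) (psi : 'I_n -> 'cV[C]_d) (c : C) p (K : 'M[C]_(p,d)) :
  K *m (c *: MC r psi) *m adjmx K = c *: MC r (fun i => K *m psi i).
Proof. by rewrite -scalemxAr -scalemxAl MC_mul. Qed.

Lemma lowerA (E : forall dX dY : nat, 'M[C]_(dX * dY) -> R) a b (UA : 'M[C]_a) (UB : 'M[C]_b)
    (r : 'M[C]_(minn a b)) (U : 'M[C]_a) (i0 : 'I_(minn a b)) :
  entanglement_measure E -> unitary_mx UA -> unitary_mx UB -> unitary_mx U ->
  is_state (mcstate UA UB r) ->
  E a b (mcstate UA UB r) <=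
  E (a * b)%N a (@VA R a b U *m mcstate UA UB r *m adjmx (@VA R a b U)).
Proof.
move=> [_ _ hmono] hA hB hU hst.
pose gL (m : 'I_(Nq a)) := tN a *: (srow m *m adjmx U).
have hL : LOCC_instr (fun m (X : 'M[C]_(a * b * a)) => \sum_(j < 1)
     tensmx (contractL b (gL m)) (1%:M : 'M[C]_a) *m X *m
       adjmx (tensmx (contractL b (gL m)) (1%:M : 'M[C]_a))).
  apply: (@LOCC_localA R (a * b) a b (Nq a) 1 (fun m _ => contractL b (gL m))).
  under eq_bigr do rewrite big_ord1.
  apply: contractL_kraus; apply: gfam_kraus.
  by rewrite adjmxK; apply: mulmx1C.
pose hqa := geq_minl a b; pose hqb := geq_minr a b.
pose Kj (m : 'I_(Nq a)) (j : 'I_a) := relab (beta UB) UA hqa i0 j *m (U *m diag_mx (srow m)).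
have hG : forall m, LOCC1 (fun X : 'M[C]_(b * a) => \sum_j
     tensmx (1%:M : 'M[C]_b) (Kj m j) *m X *m adjmx (tensmx (1%:M : 'M[C]_b) (Kj m j))).
  move=> m; apply: locB1; apply: kraus_mulr; last exact: unitary_UD.
  by apply: relab_kraus => //; apply: ortho_col.
have h2 : LOCC1 (fun X : 'M[C]_(b * b) => \sum_j
     tensmx (relab (alpha UA) UB hqb i0 j) (1%:M : 'M[C]_b) *m X *m
       adjmx (tensmx (relab (alpha UA) UB hqb i0 j) (1%:M : 'M[C]_b))).
  by apply: locA1; apply: relab_kraus => //; apply: ortho_col.
have hP := LOCC1_channel (LOCC1_comp (LOCC1_cond hL hG) h2).
have hst' : is_state (@VA R a b U *m mcstate UA UB r *m adjmx (@VA R a b U)).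
  by apply: is_state_iso => //; apply: VA_iso.
have := hmono _ _ _ _ _ _ hP hst'; congr (_ <= _); congr (E _ _ _) => /=.
have b0 : (0 < b)%N := leq_ltn_trans (leq0n i0) (leq_trans (ltn_ord i0) hqb).
have a0 : (0 < a)%N := leq_ltn_trans (leq0n i0) (leq_trans (ltn_ord i0) hqa).
rewrite !mcstate_MC MC_mul.
set S := \sum_(m < Nq a) _.
have -> : S = MC r (fun i => (tensmx (beta UB i) (beta UB i) : 'cV_(b * b))).
  rewrite /S -(sum_tN a (MC r (fun i => (tensmx (beta UB i) (beta UB i) : 'cV_(b * b))))).
  apply: eq_bigr => m _.
  rewrite big_ord1 MC_mul (MC_ext _ (fun i => stepA_vec (alpha UA i) (beta UB i) m hU)).
  rewrite MC_scale; under eq_bigr do rewrite MC_scaleX.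
  rewrite -scaler_sumr; congr (_ *: _).
  rewrite -(MC_delta0 a0 r (fun i => (tensmx (beta UB i) (beta UB i) : 'cV_(b * b)))).
  apply: eq_bigr => j _; apply: MC_ext => i.
  exact: stepA_gam.
exact: relabA_MC.
Qed.

Lemma srow_delta q m (k : 'I_q) :
  ((tN q *: (srow m *m adjmx (1%:M : 'M[C]_q))) *m (delta_mx k 0 : 'cV[C]_q)) 0 0 = tN q * sg (fm m k).
Proof. by rewrite -col1; apply: srow_col; apply: unitary1. Qed.

Lemma stepAB_vec a b (U : 'M[C]_a) (W : 'M[C]_b) (x : 'cV[C]_a) (y : 'cV[C]_b) m :
  unitary_mx U -> unitary_mx W ->
  tensmx (tensmx (1%:M : 'M[C]_a) (W *m diag_mx (srow m) *m adjmx W)) (1%:M : 'M[C]_a) *m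
   (tensmx (1%:M : 'M[C]_(a * b)) (contractR a (tN b *: (srow m *m adjmx 1%:M))) *m
    (@VAB R a b U W *m tensmx x y : 'cV_(a * b * (a * b))))
  = tN b *: (@VA R a b U *m tensmx x y : 'cV_(a * b * a)).
Proof.
move=> hU hW.
set M := W *m diag_mx (srow m) *m adjmx W.
have hy : y = M *m \sum_l (((adjmx (col l W) *m y) 0 0 * sg (fm m l)) *: col l W).
  rewrite /M.
  have -> : \sum_l (((adjmx (col l W) *m y) 0 0 * sg (fm m l)) *: col l W)
     = W *m (diag_mx (srow m) *m (adjmx W *m y)).
    rewrite mul_cols; apply: eq_bigr => l _.
    rewrite mul_diag_mx !mxE mulrC; congr (_ *: _); congr (_ * _).
    by apply: eq_bigr => j _; rewrite !mxE.
  rewrite -!mulmxA (mulmxA (adjmx W)) hW mul1mx (mulmxA (diag_mx _)) diag_sq mul1mx.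
  by rewrite mulmxA (mulmx1C hW) mul1mx.
rewrite VAB_tens VA_tens !mulmx_sumr scaler_sumr; apply: eq_bigr => k _.
rewrite !mulmx_sumr [in RHS]hy mulmx_sumr tensmx_sumr tensmx_suml !scaler_sumr.
apply: eq_bigr => l _.
rewrite -!scalemxAr !tens_apply !mul1mx contractR_tens srow_delta.
rewrite (@tensmx_mul _ a a b b 1 1 1%:M M (col k U) (col l W)) mul1mx.
rewrite !tensmxZr !tensmxZl !scalerA; congr (_ *: _); ring.
Qed.

Lemma unitary_WDW b (W : 'M[C]_b) m : unitary_mx W ->
  adjmx (W *m diag_mx (srow m) *m adjmx W) *m (W *m diag_mx (srow m) *m adjmx W) = 1%:M.
Proof.
move=> hW; rewrite !adjmx_mul adjmxK adj_diag.
rewrite -!mulmxA (mulmxA (adjmx W)) hW mul1mx (mulmxA (diag_mx _)) diag_sq mul1mx.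
exact: (mulmx1C hW).
Qed.

Lemma lowerAB (E : forall dX dY : nat, 'M[C]_(dX * dY) -> R) a b (UA : 'M[C]_a) (UB : 'M[C]_b)
    (r : 'M[C]_(minn a b)) (U : 'M[C]_a) (W : 'M[C]_b) :
  entanglement_measure E -> unitary_mx U -> unitary_mx W ->
  is_state (mcstate UA UB r) ->
  E (a * b)%N a (@VA R a b U *m mcstate UA UB r *m adjmx (@VA R a b U)) <=
  E (a * b)%N (a * b)%N (@VAB R a b U W *m mcstate UA UB r *m adjmx (@VAB R a b U W)).
Proof.
move=> [_ _ hmono] hU hW hst.
pose gR (m : 'I_(Nq b)) := tN b *: (srow m *m adjmx (1%:M : 'M[C]_b)).
have hL : LOCC_instr (fun m (X : 'M[C]_(a * b * (a * b))) => \sum_(j < 1)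
     tensmx (1%:M : 'M[C]_(a * b)) (contractR a (gR m)) *m X *m
       adjmx (tensmx (1%:M : 'M[C]_(a * b)) (contractR a (gR m)))).
  apply: (@LOCC_localB R (a * b) (a * b) a (Nq b) 1 (fun m _ => contractR a (gR m))).
  under eq_bigr do rewrite big_ord1.
  apply: contractR_kraus; apply: gfam_kraus.
  by rewrite adjmxK adjmx1 mul1mx.
pose KM (m : 'I_(Nq b)) := tensmx (1%:M : 'M[C]_a) (W *m diag_mx (srow m) *m adjmx W).
have hG : forall m, LOCC1 (fun X : 'M[C]_(a * b * a) => \sum_(j < 1)
     tensmx (KM m) (1%:M : 'M[C]_a) *m X *m adjmx (tensmx (KM m) (1%:M : 'M[C]_a))).
  move=> m; have hk : kraus (fun _ : 'I_1 => KM m).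
    rewrite /kraus big_ord1 /KM adjmx_tens adjmx1 tensmx_mul mul1mx unitary_WDW //.
    exact: tens11.
  exact: (@locA1 R (a * b) a (a * b) 1 (fun _ => KM m) hk).
have hP := LOCC1_channel (LOCC1_cond hL hG).
have hst' : is_state (@VAB R a b U W *m mcstate UA UB r *m adjmx (@VAB R a b U W)).
  by apply: is_state_iso => //; apply: VAB_iso.
have := hmono _ _ _ _ _ _ hP hst'; congr (_ <= _); congr (E _ _ _) => /=.
rewrite !mcstate_MC !MC_mul.
rewrite -(sum_tN b (MC r (fun i => @VA R a b U *m tensmx (alpha UA i) (beta UB i)))).
apply: eq_bigr => m _.
rewrite !big_ord1 !MC_mul -MC_scale; apply: MC_ext => i.
exact: stepAB_vec.
Qed.

Lemma upper_gen (E : forall dX dY : nat, 'M[C]_(dX * dY) -> R) a b (UA : 'M[C]_a) (UB : 'M[C]_b)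
    (r : 'M[C]_(minn a b)) (i0 : 'I_(minn a b)) p (w : 'I_(minn a b) -> 'cV[C]_p) :
  entanglement_measure E -> unitary_mx UA -> unitary_mx UB ->
  is_state (mcstate UA UB r) -> ortho w ->
  E (a * b)%N p (MC r (fun i =>
      (tensmx (tensmx (alpha UA i) (beta UB i) : 'cV_(a * b)) (w i) : 'cV_(a * b * p))))
  <= E a b (mcstate UA UB r).
Proof.
move=> [_ _ hmono] hA hB hst hw.
pose hqa := geq_minl a b; pose hqb := geq_minr a b.
have hv : ortho (fun i => (tensmx (alpha UA i) (beta UB i) : 'cV_(a * b))).
  by apply: ortho_tens; apply: ortho_col.
have h1 : LOCC1 (fun X : 'M[C]_(a * b) => \sum_j
     tensmx (relab (fun i => (tensmx (alpha UA i) (beta UB i) : 'cV_(a * b))) UA hqa i0 j)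
       (1%:M : 'M[C]_b) *m X *m
     adjmx (tensmx (relab (fun i => (tensmx (alpha UA i) (beta UB i) : 'cV_(a * b))) UA hqa i0 j)
       (1%:M : 'M[C]_b))).
  by apply: locA1; apply: relab_kraus.
have h2 : LOCC1 (fun X : 'M[C]_(a * b * b) => \sum_j
     tensmx (1%:M : 'M[C]_(a * b)) (relab w UB hqb i0 j) *m X *m
     adjmx (tensmx (1%:M : 'M[C]_(a * b)) (relab w UB hqb i0 j))).
  by apply: locB1; apply: relab_kraus.
have hP := LOCC1_channel (LOCC1_comp h1 h2).
have := hmono _ _ _ _ _ _ hP hst; congr (_ <= _); congr (E _ _ _) => /=.
rewrite mcstate_MC.
rewrite (relabA_MC (fun i => (tensmx (alpha UA i) (beta UB i) : 'cV_(a * b))) hqa i0 r (beta UB) hA).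
exact: (relabB_MC w hqb i0 r (fun i => (tensmx (alpha UA i) (beta UB i) : 'cV_(a * b))) hB).
Qed.

Lemma VA_own a b (U : 'M[C]_a) (y : 'cV[C]_b) k0 : unitary_mx U ->
  @VA R a b U *m tensmx (col k0 U) y =
  tensmx (tensmx (col k0 U) y) (delta_mx k0 0 : 'cV[C]_a).
Proof.
move=> hU; rewrite VA_tens (bigD1 k0) //= big1 ?addr0.
  by rewrite col_orth // eqxx mxE eqxx /= mulr1n scale1r.
by move=> k /negbTE hk; rewrite col_orth // hk mxE eqxx /= mulr0n scale0r.
Qed.

Lemma VAB_own a b (U : 'M[C]_a) (W : 'M[C]_b) k0 l0 : unitary_mx U -> unitary_mx W ->
  @VAB R a b U W *m tensmx (col k0 U) (col l0 W) =
  tensmx (tensmx (col k0 U) (col l0 W))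
    (tensmx (delta_mx k0 0 : 'cV[C]_a) (delta_mx l0 0 : 'cV[C]_b)).
Proof.
move=> hU hW; rewrite VAB_tens (bigD1 k0) //= [X in _ + X = _]big1 ?addr0; last first.
  move=> k /negbTE hk; rewrite big1 // => l _.
  by rewrite col_orth // hk mxE eqxx /= mulr0n mul0r scale0r.
rewrite (bigD1 l0) //= big1 ?addr0.
  by rewrite !col_orth // !eqxx !mxE /= mulr1n mulr1 scale1r.
by move=> l /negbTE hl; rewrite (col_orth hW) hl [X in _ * X]mxE /= mulr0n mulr0 scale0r.
Qed.

Lemma inf_attained (S : set R) x : S x -> (forall y, S y -> x <= y) -> inf S = x.
Proof.
move=> Sx hx; apply: order.Order.POrderTheory.le_anti; apply/andP; split.
  have hlb : has_lbound S by exists x.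
  exact: (ge_inf hlb Sx).
by apply: lb_le_inf; [exists x | exact: hx].
Qed.
End Q.

Theorem theorem15 (R : realType)
    (E : forall dX dY : nat, 'M[R[i]]_(dX * dY) -> R)
    (a b : nat) (UA : 'M[R[i]]_a) (UB : 'M[R[i]]_b)
    (r : 'M[R[i]]_(minn a b)) :
  entanglement_measure E ->
  unitary_mx UA -> unitary_mx UB ->
  is_state (mcstate UA UB r) ->
  QAB E a b (mcstate UA UB r) = QA E a b (mcstate UA UB r) /\
  QA E a b (mcstate UA UB r) = E a b (mcstate UA UB r).
Proof.
move=> hE hA hB hst.
have n0 : (0 < minn a b)%N.
  rewrite lt0n; apply/negP => /eqP h0; move: (hst) => [_ htr].
  have h : mcstate UA UB r = 0.
    by rewrite /mcstate big1 // => i _; exfalso; have := ltn_ord i; rewrite [X in (_ < X)%N]h0.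
  by move: htr; rewrite h mxtrace0 => /eqP; rewrite eq_sym oner_eq0.
pose i0 := Ordinal n0.
pose hqa := geq_minl a b; pose hqb := geq_minr a b.
have sA : @VA R a b UA *m mcstate UA UB r *m adjmx (@VA R a b UA) =
   MC r (fun i => (tensmx (tensmx (alpha UA i) (beta UB i) : 'cV_(a * b))
                     (delta_mx (widen_ord hqa i) 0 : 'cV[R[i]]_a) : 'cV_(a * b * a))).
  rewrite mcstate_MC MC_mul; apply: MC_ext => i; exact: VA_own.
have sAB : @VAB R a b UA UB *m mcstate UA UB r *m adjmx (@VAB R a b UA UB) =
   MC r (fun i => (tensmx (tensmx (alpha UA i) (beta UB i) : 'cV_(a * b))
                     (tensmx (delta_mx (widen_ord hqa i) 0 : 'cV[R[i]]_a)
                             (delta_mx (widen_ord hqb i) 0 : 'cV[R[i]]_b) : 'cV_(a * b))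
                   : 'cV_(a * b * (a * b)))).
  rewrite mcstate_MC MC_mul; apply: MC_ext => i; exact: VAB_own.
have eA : QA E a b (mcstate UA UB r) = E a b (mcstate UA UB r).
  apply: inf_attained.
    exists UA; split => //; apply: order.Order.POrderTheory.le_anti; apply/andP; split.
      exact: (@lowerA R E a b UA UB r UA i0).
    rewrite sA; exact: (@upper_gen R E a b UA UB r i0 a
       (fun i => delta_mx (widen_ord hqa i) 0) hE hA hB hst (ortho_delta _ hqa)).
  by move=> y [U [hU ->]]; apply: (@lowerA R E a b UA UB r U i0).
have eAB : QAB E a b (mcstate UA UB r) = E a b (mcstate UA UB r).
  apply: inf_attained.
    exists UA, UB; split => //; split => //.
    apply: order.Order.POrderTheory.le_anti; apply/andP; split.
      exact: order.Order.POrderTheory.le_trans (@lowerA R E a b UA UB r UA i0 hE hA hB hA hst)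
        (@lowerAB R E a b UA UB r UA UB hE hA hB hst).
    rewrite sAB; exact: (@upper_gen R E a b UA UB r i0 (a * b)
       (fun i => (tensmx (delta_mx (widen_ord hqa i) 0 : 'cV[R[i]]_a)
                        (delta_mx (widen_ord hqb i) 0 : 'cV[R[i]]_b) : 'cV_(a * b)))
       hE hA hB hst (ortho_tens (ortho_delta _ hqa) (ortho_delta _ hqb))).
  move=> y [U [W [hU [hW ->]]]].
  exact: order.Order.POrderTheory.le_trans (@lowerA R E a b UA UB r U i0 hE hA hB hU hst)
        (@lowerAB R E a b UA UB r U W hE hU hW hst).
by split; [rewrite eA eAB | exact: eA].
Qed.
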